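(* Let $f:\mathbb{R}\to\mathbb{R}$ satisfy $f(0)=0$ and $|f(u)-f(v)|\leq C|u-v|(e^{\lambda u^2}+e^{\lambda v^2})$ for all $u,v\in\mathbb{R}$, for some constants $C,\lambda>0$. Let $v\in L^\infty(\mathbb{R}^N)$ and $w_1,w_2\in\exp L^2(\mathbb{R}^N)$ with $\|w_1\|_{\exp L^2},\|w_2\|_{\exp L^2}\leq K$ for some $K>0$. Let $2\leq q<\infty$ and assume $4\lambda qK^2\leq1$. Then there exists a constant $C_q>0$ depending on $q$ such that $$\|f(w_1+v)-f(w_2+v)\|_{L^q}\leq C_q\,e^{2\lambda\|v\|_{L^\infty}^2}\|w_1-w_2\|_{\exp L^2}.$$
   Context: The Orlicz space $\exp L^2(\mathbb{R}^N)$ is the set of $u\in L^1_{loc}(\mathbb{R}^N)$ such that $\int_{\mathbb{R}^N}(e^{|u(x)|^2/\alpha^2}-1)\,dx<\infty$ for some $\alpha>0$, with the Luxemburg norm $\|u\|_{\exp L^2}=\inf\{\alpha>0:\int_{\mathbb{R}^N}(e^{|u(x)|^2/\alpha^2}-1)\,dx\leq 1\}$. *)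

(* Defs.v *)
From HB Require Import structures.
From mathcomp Require Import all_boot all_order all_algebra.
From mathcomp Require Import all_classical all_reals all_analysis.
Set Implicit Arguments. Unset Strict Implicit. Unset Printing Implicit Defensive.
Import Order.TTheory GRing.Theory Num.Theory.
Import numFieldNormedType.Exports.
Local Open Scope classical_set_scope.
Local Open Scope ring_scope.

Section OrliczExpL2.
Context {d : measure_display} {T : measurableType d} {R : realType}.
Variable mu : {measure set T -> \bar R}.

Definition expL2_integral (u : T -> R) (a : R) : \bar R :=
  (\int[mu]_x ((expR (`|u x| ^+ 2 / a ^+ 2) - 1)%:E))%E.

Definition in_expL2 (u : T -> R) : Prop :=
  measurable_fun setT u /\ exists a : R, 0 < a /\ (expL2_integral u a < +oo)%E.

Definition expL2_norm (u : T -> R) : \bar R :=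
  ereal_inf [set a%:E | a in [set a : R | 0 < a /\ (expL2_integral u a <= 1)%E]].

Definition in_Linf (v : T -> R) : Prop :=
  measurable_fun setT v /\ ('N[mu]_(+oo%E)[EFin \o v] < +oo)%E.

Definition Linf_norm (v : T -> R) : R := fine ('N[mu]_(+oo%E)[EFin \o v]).

End OrliczExpL2.

(* Main.v *)
Require Import Defs.
From HB Require Import structures.
From mathcomp Require Import all_boot all_order all_algebra.
From mathcomp Require Import all_classical all_reals all_analysis.
From mathcomp Require Import ring lra zify.
From mathcomp Require Import measurable_realfun ess_sup_inf.
Import numFieldNormedType.Exports.
Import Order.TTheory GRing.Theory Num.Theory.
Import numFieldNormedType.Exports.
Local Open Scope classical_set_scope.
Local Open Scope ring_scope.
Section L. Context {R : realType}.

Lemma poly1 (x h : R) : 0 <= x -> 1 <= h -> x * h ^+ 2 <= x + x ^+ 3 + (h ^+ 3 - 1).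
Proof. move=> x0 h1.
set r := Num.sqrt (h ^+ 2 - 1).
have r0 : 0 <= r by exact: sqrtr_ge0.
have r2 : r ^+ 2 = h ^+ 2 - 1 by rewrite sqr_sqrtr//; nra.
have rh : r <= h by nra.
have A : 3 * (x * r ^+ 2) <= x ^+ 3 + 2 * r ^+ 3.
  have : 0 <= (x - r) ^+ 2 * (x + 2 * r) by apply: mulr_ge0; [exact: sqr_ge0| lra].
  move=> H. have E : (x - r) ^+ 2 * (x + 2 * r) = x ^+ 3 + 2 * r ^+ 3 - 3 * (x * r ^+ 2) by ring.
  lra.
have B : r ^+ 3 <= h ^+ 3 - h.
  have -> : r ^+ 3 = r * r ^+ 2 by ring.
  have -> : h ^+ 3 - h = h * (h ^+ 2 - 1) by ring.
  rewrite r2; apply: ler_wpM2r => //; nra.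
have x3 : 0 <= x ^+ 3 by exact: exprn_ge0.
have h3 : 1 <= h ^+ 3 by exact: exprn_ege1.
have -> : x * h ^+ 2 = x + x * r ^+ 2 by rewrite r2; ring.
lra.
Qed.


Lemma my_expR_ge1 {s : R} : 0 <= s -> 1 <= expR s.
Proof. move=> s0; apply: le_trans (expR_ge1Dx s); lra. Qed.

Lemma pow_le_exp (rho p : R) (m : nat) : 0 <= rho -> 2 <= p -> p <= m.+1%:R ->
  rho `^ p <= (1 + m.+1`!%:R) * (expR (rho ^+ 2) - 1).
Proof.
move=> r0 p2 pn.
have e0 : 0 <= expR (rho ^+ 2) - 1.
  have := my_expR_ge1 (sqr_ge0 rho); lra.
have c1 : 1 <= 1 + m.+1`!%:R :> R by rewrite lerDl.
case: (lerP rho 1) => hr.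
  have h1 : rho `^ p <= rho ^+ 2.
    have [->|rp] := eqVneq rho 0.
      rewrite powR0; last by apply/eqP => p0; rewrite p0 in p2; lra.
      by rewrite expr0n /=.
    have rpos : 0 < rho by rewrite lt_neqAle eq_sym rp r0.
    rewrite -powR_mulrn//.
    by apply: ger_powR => //; rewrite rpos hr.
  have h2 : rho ^+ 2 <= expR (rho ^+ 2) - 1.
    have := expR_ge1Dx (rho ^+ 2); lra.
  apply: (le_trans h1); apply: (le_trans h2).
  rewrite -[X in X <= _]mul1r; apply: ler_wpM2r => //.
have h1 : rho `^ p <= (rho ^+ 2) ^+ m.+1.
  rewrite -exprM -powR_mulrn//.
  apply: ler_powR; first exact: ltW.
  apply: (le_trans pn); rewrite ler_nat; lia.
have h2 : (rho ^+ 2) ^+ m.+1 <= m.+1`!%:R * (expR (rho ^+ 2) - 1).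
  have := expR_ge1Dxn m (sqr_ge0 rho).
  have f0 : 0 < m.+1`!%:R :> R by rewrite ltr0n fact_gt0.
  move=> H.
  rewrite mulrC -ler_pdivrMr//; lra.
apply: (le_trans h1); apply: (le_trans h2).
apply: ler_wpM2r => //; rewrite lerDr //.
Qed.

End L.
Section P. Context {R : realType}.
Lemma pointwise (f : R -> R) (C lam q a b M V W1 W2 : R) (m : nat) :
  0 < C -> 0 < lam ->
  (forall u v : R, `|f u - f v| <= C * `|u - v| * (expR (lam * u ^+ 2) + expR (lam * v ^+ 2))) ->
  2 <= q -> 3 * q <= m.+1%:R -> 0 < a -> 0 < b -> 3 * lam * q * b ^+ 2 <= 1 ->
  `|V| <= M ->
  `|f (W1 + V) - f (W2 + V)| `^ q <=
   (2 * C * expR (2 * lam * M ^+ 2) * a) `^ q *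
   (2 * (1 + m.+1`!%:R) * (expR (`|W1 - W2| ^+ 2 / a ^+ 2) - 1)
    + (expR (`|W1| ^+ 2 / b ^+ 2) - 1) + (expR (`|W2| ^+ 2 / b ^+ 2) - 1)).
Proof.
move=> C0 l0 hf q2 qm a0 b0 lb VM.
have [s [s1 [s2 sE]]] : exists s, `|W1| ^+ 2 <= s /\ `|W2| ^+ 2 <= s /\
    (s = `|W1| ^+ 2 \/ s = `|W2| ^+ 2).
  case: (lerP (`|W1| ^+ 2) (`|W2| ^+ 2)) => h.
    by exists (`|W2| ^+ 2); split => //; split => //; right.
  by exists (`|W1| ^+ 2); split; [|split; [exact: ltW|left]].
have s0 : 0 <= s by apply: le_trans s1; exact: sqr_ge0.
set G := expR (2 * lam * M ^+ 2).
set E := expR (2 * lam * s).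
set h := expR (q * lam * s).
have G0 : 0 < G by exact: expR_gt0.
have E0 : 0 < E by exact: expR_gt0.
have M0 : 0 <= M := le_trans (normr_ge0 V) VM.
have step2 : forall W, `|W| ^+ 2 <= s -> expR (lam * (W + V) ^+ 2) <= G * E.
  move=> W Ws; rewrite /G /E -expRD ler_expR.
  have e1 : (W + V) ^+ 2 = `|W + V| ^+ 2 by rewrite real_normK// num_real.
  have e2 : `|W + V| <= `|W| + M by apply: (le_trans (ler_normD _ _)); rewrite lerD2l.
  have e3 : 0 <= `|W + V| := normr_ge0 _.
  have e4 : 0 <= `|W| := normr_ge0 _.
  rewrite e1.
  have f1 : `|W + V| ^+ 2 <= (`|W| + M) ^+ 2.
    rewrite ler_sqr ?nnegrE//; exact: addr_ge0.
  have f2 : 0 <= (`|W| - M) ^+ 2 := sqr_ge0 _.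
  have : `|W + V| ^+ 2 <= 2 * s + 2 * M ^+ 2 by nra.
  move=> H; nra.
set D := W1 - W2.
set A := `|f (W1 + V) - f (W2 + V)|.
have A0 : 0 <= A := normr_ge0 _.
have step3 : A <= (2 * C * G * a) * (`|D| / a * E).
  rewrite /A; apply: (le_trans (hf _ _)).
  have -> : W1 + V - (W2 + V) = D by rewrite /D; ring.
  have := step2 _ s1; have := step2 _ s2.
  have := normr_ge0 D.
  have -> : 2 * C * G * a * (`|D| / a * E) = 2 * C * G * `|D| * E.
    by field; rewrite gt_eqF.
  move=> ? ? ?.
  have CD : 0 <= C * `|D| by apply: mulr_ge0 => //; exact: ltW.
  have -> : 2 * C * G * `|D| * E = (C * `|D|) * (G * E + G * E) by ring.
  apply: ler_wpM2l => //; exact: lerD.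
set rho := `|D| / a.
have rho0 : 0 <= rho by rewrite /rho divr_ge0// ltW.
have B0 : 0 <= 2 * C * G * a by rewrite !mulr_ge0// ltW.
have step4 : A `^ q <= (2 * C * G * a) `^ q * (rho `^ q * h ^+ 2).
  have q0 : 0 <= q by lra.
  apply: (le_trans (ge0_ler_powR q0 _ _ step3)).
  - by rewrite nnegrE.
  - by rewrite nnegrE mulr_ge0// mulr_ge0// ltW.
  rewrite (@powRM R _ _ q B0 (mulr_ge0 rho0 (ltW E0))) (@powRM R _ _ q rho0 (ltW E0)).
  have -> : E `^ q = h ^+ 2.
    by rewrite /E /h -expRM -expRM_natl; congr expR; ring.
  by [].
set x := rho `^ q.
have x0 : 0 <= x := powR_ge0 _ _.
have h1 : 1 <= h by apply: my_expR_ge1; rewrite mulr_ge0// mulr_ge0// ?ltW//; lra.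
have step5 := poly1 _ _ x0 h1.
set c := 1 + m.+1`!%:R.
have rho2 : rho ^+ 2 = `|D| ^+ 2 / a ^+ 2 by rewrite /rho expr_div_n.
have xb : x <= c * (expR (`|D| ^+ 2 / a ^+ 2) - 1).
  rewrite -rho2; apply: pow_le_exp => //; lra.
have x3b : x ^+ 3 <= c * (expR (`|D| ^+ 2 / a ^+ 2) - 1).
  rewrite -rho2 /x -powR_mulrn ?powR_ge0// -powRrM; apply: pow_le_exp => //; lra.
have h3b : h ^+ 3 - 1 <= (expR (`|W1| ^+ 2 / b ^+ 2) - 1) + (expR (`|W2| ^+ 2 / b ^+ 2) - 1).
  have z1 := my_expR_ge1 (divr_ge0 (sqr_ge0 `|W1|) (sqr_ge0 b)).
  have z2 := my_expR_ge1 (divr_ge0 (sqr_ge0 `|W2|) (sqr_ge0 b)).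
  have hs : h ^+ 3 <= expR (s / b ^+ 2).
    rewrite /h -expRM_natl ler_expR.
    have bb : 0 < b ^+ 2 by exact: exprn_gt0.
    rewrite ler_pdivlMr//.
    have -> : 3%:R * (q * lam * s) * b ^+ 2 = (3 * lam * q * b ^+ 2) * s by ring.
    rewrite -[X in _ <= X]mul1r; exact: ler_wpM2r.
  case: sE => sE; rewrite sE in hs; lra.
apply: (le_trans step4); apply: ler_wpM2l; first exact: powR_ge0.
apply: (le_trans step5); lra.
Qed.
End P.
Section C. Context {R : realType}.
Lemma f_cont (f : R -> R) (C lam : R) : 0 < C -> 0 < lam ->
  (forall u v : R, `|f u - f v| <= C * `|u - v| * (expR (lam * u ^+ 2) + expR (lam * v ^+ 2))) ->
  continuous f.
Proof.
move=> C0 l0 hf u; apply/cvgrPdist_lt => e e0.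
set B := 2 * expR (lam * (`|u| + 1) ^+ 2).
have B0 : 0 < B by rewrite /B mulr_gt0// expR_gt0.
set dl := Num.min 1 (e / (2 * C * B)).
have dl0 : 0 < dl.
  rewrite /dl lt_min ltr01 /=; apply: divr_gt0 => //; apply: mulr_gt0 => //; apply: mulr_gt0 => //.
have dl1 : dl <= 1 by rewrite /dl ge_min lexx.
have dle : dl <= e / (2 * C * B) by rewrite /dl ge_min lexx orbT.
have := @near_ball _ _ u dl dl0; apply: filterS => t; rewrite /ball /= => ut.
apply: le_lt_trans (hf u t) _.
have bnd : forall y, `|y| <= `|u| + 1 -> expR (lam * y ^+ 2) <= expR (lam * (`|u| + 1) ^+ 2).
  move=> y hy; rewrite ler_expR ler_pM2l// -real_normK ?num_real//.
  by rewrite ler_sqr ?nnegrE// addr_ge0.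
have hu : `|u| <= `|u| + 1 by rewrite lerDl.
have ht : `|t| <= `|u| + 1.
  have : `|t| <= `|u| + `|u - t|.
    have -> : `|t| = `|u - (u - t)| by congr `|_|; ring.
    exact: ler_normB.
  move=> H; apply: (le_trans H); rewrite lerD2l; lra.
have S : expR (lam * u ^+ 2) + expR (lam * t ^+ 2) <= B.
  by rewrite /B mulr2n mulrDl mul1r; apply: lerD; apply: bnd.
have n0 : 0 <= `|u - t| := normr_ge0 _.
have : C * `|u - t| * (expR (lam * u ^+ 2) + expR (lam * t ^+ 2)) <= C * dl * B.
  rewrite -!mulrA; apply: ler_wpM2l; first exact: ltW.
  apply: (le_trans (ler_wpM2l n0 S)); apply: ler_wpM2r; [exact: ltW|lra].
have : C * dl * B <= e / 2.
  have -> : e / 2 = C * (e / (2 * C * B)) * B by field; rewrite !gt_eqF.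
  by apply: ler_wpM2r; [exact: ltW|apply: ler_wpM2l => //; exact: ltW].
lra.
Qed.
End C.

Section M. Context {d} {T : measurableType d} {R : realType} (mu : {measure set T -> \bar R}).
Local Open Scope ereal_scope.

Lemma mexp (u : T -> R) (a : R) : measurable_fun setT u ->
  measurable_fun [set: T] (fun x : T => (expR (`|u x| ^+ 2 / a ^+ 2) - 1)%R%:E).
Proof.
move=> mu'; change (measurable_fun setT (EFin \o (fun x => expR (`|u x| ^+ 2 / a ^+ 2) - 1)%R)); apply/measurable_EFinP.
apply: measurable_funB => //; apply: measurableT_comp; first exact: measurable_expR.
apply: measurable_funM => //; apply: measurable_funX; apply: measurableT_comp => //.
Qed.

Lemma exp_ge0 (s : R) : (0 <= s)%R -> (0 <= expR s - 1)%R.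
Proof. by move=> s0; have := my_expR_ge1 s0; rewrite subr_ge0. Qed.

Lemma expL2_mono (u : T -> R) (a b : R) : measurable_fun setT u -> (0 < a)%R -> (a <= b)%R ->
  expL2_integral mu u b <= expL2_integral mu u a.
Proof.
move=> mu' a0 ab; apply: ge0_le_integral => //.
- move=> x _; rewrite lee_fin; apply: exp_ge0; apply: divr_ge0; exact: sqr_ge0.
- exact: mexp.
- exact: mexp.
move=> x _; rewrite lee_fin lerD2r ler_expR ler_wpM2l ?sqr_ge0//.
rewrite lef_pV2 ?posrE ?exprn_gt0//; last exact: lt_le_trans ab.
rewrite ler_sqr ?nnegrE//; [exact: ltW| apply: ltW; exact: lt_le_trans ab].
Qed.

Lemma orlicz_lt (u : T -> R) (a : R) : measurable_fun setT u -> (0 < a)%R ->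
  expL2_norm mu u < a%:E -> expL2_integral mu u a <= 1.
Proof.
move=> mu' a0 /ereal_inf_lt [y [b [b0 hb] <-]]; rewrite lte_fin => ba.
apply: le_trans hb; apply: expL2_mono => //; exact: ltW.
Qed.

Lemma expL2_norm_ge0 (u : T -> R) : 0 <= expL2_norm mu u.
Proof.
apply: le_ereal_inf_tmp => y [b [b0 _] <-]; rewrite lee_fin; exact: ltW.
Qed.

Lemma ae_Linf (v : T -> R) : in_Linf mu v -> \forall x \ae mu, (`|v x| <= Linf_norm mu v)%R.
Proof.
move=> [mv]; rewrite /Linf_norm unlock /=.
case: ifPn => [mu0 hlt|]; last first.
  rewrite -leNgt => mu0 _; apply: measure0_ae.
  by apply/eqP; rewrite eq_le mu0 measure_ge0.
have h0 : 0 <= ess_sup mu (abse \o (EFin \o v)).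
  by apply: ess_sup_gee => //; apply: aeW => x; exact: abse_ge0.
have := ess_sup_ge mu (abse \o (EFin \o v)).
apply: filterS => x /=.
by move=> h; rewrite -lee_fin fineK ?ge0_fin_numE.
Qed.
End M.
Theorem lemma4p4 (R : realType) (d : measure_display) (T : measurableType d)
  (mu : {measure set T -> \bar R}) (f : R -> R) (C lam K q : R) :
  f 0 = 0 -> 0 < C -> 0 < lam ->
  (forall u v : R, `|f u - f v| <= C * `|u - v| * (expR (lam * u ^+ 2) + expR (lam * v ^+ 2))) ->
  0 < K -> 2 <= q -> 4 * lam * q * K ^+ 2 <= 1 ->
  exists Cq : R, 0 < Cq /\
    forall v w1 w2 : T -> R,
      in_Linf mu v -> in_expL2 mu w1 -> in_expL2 mu w2 ->
      (expL2_norm mu w1 <= K%:E)%E -> (expL2_norm mu w2 <= K%:E)%E ->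
      ('N[mu]_(q%:E)[EFin \o (fun x => f (w1 x + v x) - f (w2 x + v x))%R]
        <= (Cq * expR (2 * lam * Linf_norm mu v ^+ 2))%:E * expL2_norm mu (w1 \- w2)%R)%E.
Proof.
move=> f0 C0 l0 hf K0 q2 hK.
have [m qm] : exists m : nat, 3 * q <= m.+1%:R.
  by exists (Num.truncn (3 * q)); apply/ltW/truncnS_gt.
pose c : R := 1 + m.+1`!%:R.
have c1 : 1 <= c by rewrite /c lerDl.
pose k : R := 2 * c + 2.
have k1 : 1 <= k by rewrite /k; lra.
exists (2 * C * k); split; first by rewrite !mulr_gt0//; lra.
move=> v w1 w2 hv [mw1 _] [mw2 _] n1 n2.
have mv := hv.1.
set M := Linf_norm mu v.
set G := expR (2 * lam * M ^+ 2).
have G0 : 0 < G by exact: expR_gt0.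
have mf := continuous_measurable_fun (@f_cont _ f C lam C0 l0 hf).
set F := fun x => f (w1 x + v x) - f (w2 x + v x).
have mF : measurable_fun setT F.
  apply: measurable_funB; apply: measurableT_comp => //; exact: measurable_funD.
set b := Num.sqrt (4 * K ^+ 2 / 3).
have b2 : b ^+ 2 = 4 * K ^+ 2 / 3.
  rewrite sqr_sqrtr//; apply: divr_ge0 => //; apply: mulr_ge0 => //; exact: sqr_ge0.
have bge0 : 0 <= b := sqrtr_ge0 _.
have bK : K < b.
  have : K ^+ 2 < b ^+ 2 by rewrite b2; have := exprn_gt0 2 K0; lra.
  move=> H; nra.
have b0 : 0 < b := lt_trans K0 bK.
have lb : 3 * lam * q * b ^+ 2 <= 1.
  by rewrite b2; have -> : 3 * lam * q * (4 * K ^+ 2 / 3) = 4 * lam * q * K ^+ 2 by field.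
have I1 : (expL2_integral mu w1 b <= 1)%E.
  by apply: orlicz_lt => //; apply: le_lt_trans n1 _; rewrite lte_fin.
have I2 : (expL2_integral mu w2 b <= 1)%E.
  by apply: orlicz_lt => //; apply: le_lt_trans n2 _; rewrite lte_fin.
have mD : measurable_fun setT (w1 \- w2)%R by exact: measurable_funB.
have key : forall a, 0 < a -> (expL2_norm mu (w1 \- w2)%R < a%:E)%E ->
    ('N[mu]_(q%:E)[EFin \o F] <= (2 * C * k * G * a)%:E)%E.
  move=> a a0 na.
  have ID := @orlicz_lt _ _ _ mu _ a mD a0 na.
  set B := 2 * C * G * a.
  have B0 : 0 <= B by rewrite /B !mulr_ge0// ltW.
  have Bq0 : 0 <= B `^ q := powR_ge0 _ _.
  pose e0 x := expR (`|(w1 \- w2)%R x| ^+ 2 / a ^+ 2) - 1.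
  pose e1 x := expR (`|w1 x| ^+ 2 / b ^+ 2) - 1.
  pose e2 x := expR (`|w2 x| ^+ 2 / b ^+ 2) - 1.
  have ge0e : forall (u : T -> R) (r : R) x, 0 <= expR (`|u x| ^+ 2 / r ^+ 2) - 1.
    by move=> u r x; apply: exp_ge0; apply: divr_ge0; exact: sqr_ge0.
  have me0 := @mexp _ _ _ _ a mD. have me1 := @mexp _ _ _ _ b mw1. have me2 := @mexp _ _ _ _ b mw2.
  have S1 : (\int[mu]_x ((`|F x| `^ q)%:E) <=
      \int[mu]_x ((B `^ q * (2 * c * e0 x + e1 x + e2 x))%:E))%E.
    apply: ae_ge0_le_integral.
    - exact: measurableT.
    - by move=> x _; rewrite lee_fin powR_ge0.
    - have : measurable_fun setT (fun x => `|F x| `^ q).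
        apply: (measurableT_comp (measurable_powR q)).
        by apply: measurableT_comp => //; exact: normr_measurable.
      by move/measurable_EFinP.
    - move=> x _; rewrite lee_fin; apply: mulr_ge0 => //.
      rewrite /e0 /e1 /e2; apply: addr_ge0; [apply: addr_ge0|];
        [apply: mulr_ge0; [lra| exact: ge0e]| exact: ge0e| exact: ge0e].
    - have : measurable_fun setT (fun x => B `^ q * (2 * c * e0 x + e1 x + e2 x)).
        apply: measurable_funM => //.
        apply: measurable_funD; [apply: measurable_funD|];
          [apply: measurable_funM => //| |]; exact/measurable_EFinP.
      by move/measurable_EFinP.
    have := ae_Linf _ _ hv; apply: filterS => x hx _.
    rewrite lee_fin; exact: pointwise.
  have S2 : (\int[mu]_x ((B `^ q * (2 * c * e0 x + e1 x + e2 x))%:E) =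
      (B `^ q)%:E * ((2 * c)%:E * expL2_integral mu (w1 \- w2)%R a
        + expL2_integral mu w1 b + expL2_integral mu w2 b))%E.
    have c0 : (0 <= (2 * c)%:E)%E by rewrite lee_fin; lra.
    have p0 : forall x, (0 <= (e0 x)%:E)%E by move=> x; rewrite lee_fin ge0e.
    have p1 : forall x, (0 <= (e1 x)%:E)%E by move=> x; rewrite lee_fin ge0e.
    have p2 : forall x, (0 <= (e2 x)%:E)%E by move=> x; rewrite lee_fin ge0e.
    under eq_integral => x _ do rewrite EFinM EFinD EFinD EFinM.
    have q0 : forall x, (0 <= (2 * c)%:E * (e0 x)%:E)%E.
      by move=> x; apply: mule_ge0.
    rewrite (ge0_integralZl _ measurableT); first last.
    - by rewrite lee_fin.
    - by move=> x _; apply: adde_ge0; [apply: adde_ge0|].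
    - apply: emeasurable_funD; [apply: emeasurable_funD|] => //.
      exact: measurable_funeM.
    congr (_ * _)%E.
    rewrite (ge0_integralD _ measurableT); first last.
    - by [].
    - by move=> x _.
    - apply: emeasurable_funD => //; exact: measurable_funeM.
    - by move=> x _; apply: adde_ge0.
    rewrite (ge0_integralD _ measurableT); first last.
    - by [].
    - by move=> x _.
    - exact: measurable_funeM.
    - by move=> x _.
    by rewrite (ge0_integralZl _ measurableT).
  have S3 : (\int[mu]_x ((`|F x| `^ q)%:E) <= ((B * k) `^ q)%:E)%E.
    apply: (le_trans S1); rewrite S2.
    apply: le_trans (_ : ((B `^ q)%:E * ((2 * c)%:E * 1 + 1 + 1) <= _)%E).
      apply: lee_wpmul2l; first by rewrite lee_fin.
      apply: leeD => //; apply: leeD => //.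
      by apply: lee_wpmul2l => //; rewrite lee_fin; lra.
    rewrite mule1 -!EFinD -EFinM lee_fin (@powRM R B k q B0) ?ler_wpM2l//; last by lra.
    have h : k <= k `^ q by apply: le1r_powR => //; lra.
    by apply: le_trans h; rewrite /k; lra.
  rewrite unlock /=.
  have q0 : 0 <= q^-1 by rewrite invr_ge0; lra.
  apply: le_trans (gt0_ler_poweR q0 _ _ S3) _.
  - by rewrite in_itv /= leey andbT; apply: integral_ge0 => x _; rewrite lee_fin powR_ge0.
  - by rewrite in_itv /= leey andbT lee_fin powR_ge0.
  have Bk0 : 0 <= B * k by apply: mulr_ge0 => //; lra.
  rewrite (@poweR_EFin R) -(@powRrM R) mulfV ?powRr1//; last by rewrite gt_eqF//; lra.
  by rewrite lee_fin /B le_eqVlt; apply/orP; left; apply/eqP; ring.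
have ND0 := expL2_norm_ge0 mu (w1 \- w2)%R.
have P0 : 0 < 2 * C * k * G by rewrite !mulr_gt0//; lra.
move: key ND0; rewrite -/F; case: (expL2_norm mu (w1 \- w2)%R) => [r| |] key ND0.
- rewrite -EFinM; apply/lee_addgt0Pr => e e0.
  rewrite lee_fin in ND0.
  set a := r + e / (2 * C * k * G).
  have ea : 0 < e / (2 * C * k * G) by exact: divr_gt0.
  have a0 : 0 < a by rewrite /a; lra.
  have := key a a0; rewrite lte_fin /a ltrDl => /(_ ea).
  move=> H; apply: (le_trans H); rewrite -EFinD lee_fin.
  have -> : 2 * C * k * G * (r + e / (2 * C * k * G)) = 2 * C * k * G * r + e.
    by field; rewrite !gt_eqF//; lra.
  by [].
- by rewrite gt0_muley ?leey// lte_fin.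
- by [].
Qed.
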